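(* Let $m\ge 0$ be an integer. Any two singly even self-dual $[24m+4,12m+2,4m+2]$ codes with minimal shadow have the same weight enumerator; that is, the weight enumerator of a singly even self-dual $[24m+4,12m+2,4m+2]$ code with minimal shadow is uniquely determined by $m$.
   Context: A binary code of length $n$ is a subspace of $\mathbb{F}_2^n$; $C^\perp$ is its dual with respect to the standard inner product, and $C$ is self-dual if $C=C^\perp$. A self-dual code is singly even if it contains a codeword of weight $\equiv 2 \pmod 4$. For a singly even self-dual code $C$, let $C_0$ be the subcode of codewords of weight $\equiv 0\pmod 4$; the shadow of $C$ is $S=C_0^\perp\setminus C$. For $n\equiv 4\pmod 8$, $C$ is said to have minimal shadow if the minimum weight of $S$ equals $2$. An $[n,k,d]$ code is a code of length $n$, dimension $k$ and minimum weight $d$. The weight enumerator of $C$ is $\sum_{x\in C} y^{\mathrm{wt}(x)}$. *)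

(* Defs.v *)
From HB Require Import structures.
From mathcomp Require Import all_boot all_order all_algebra.
Set Implicit Arguments. Unset Strict Implicit. Unset Printing Implicit Defensive.
Import GRing.Theory.
Local Open Scope ring_scope.

Section Codes.
Variable n : nat.
Notation vec := 'rV['F_2]_n.

Definition wt (x : vec) : nat := #|[set i : 'I_n | x 0 i != 0]|.

Definition dot (x y : vec) : 'F_2 := \sum_(i < n) x 0 i * y 0 i.

Definition in_dual (C : {vspace vec}) (x : vec) : bool :=
  [forall y : vec, (y \in C) ==> (dot x y == 0)].

Definition self_dual (C : {vspace vec}) : Prop :=
  forall x : vec, (x \in C) = in_dual C x.

Definition singly_even (C : {vspace vec}) : Prop :=
  exists2 x : vec, x \in C & (wt x %% 4 = 2)%N.

Definition in_C0 (C : {vspace vec}) (x : vec) : bool :=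
  (x \in C) && (wt x %% 4 == 0)%N.

Definition in_shadow (C : {vspace vec}) (x : vec) : bool :=
  [forall y : vec, in_C0 C y ==> (dot x y == 0)] && (x \notin C).

Definition minimal_shadow (C : {vspace vec}) : Prop :=
  (exists2 s : vec, in_shadow C s & wt s = 2%N) /\
  (forall s : vec, in_shadow C s -> (2 <= wt s)%N).

Definition is_nkd_code (C : {vspace vec}) (k d : nat) : Prop :=
  \dim C = k /\
  (exists2 x : vec, (x \in C) && (x != 0) & wt x = d) /\
  (forall x : vec, x \in C -> x != 0 -> (d <= wt x)%N).

Definition weight_enum (C : {vspace vec}) : {poly int} :=
  \sum_(x : vec | x \in C) 'X^(wt x).

End Codes.

(* Main.v *)
Require Import Defs.
From mathcomp Require Import all_boot all_order all_algebra.
From HB Require Import structures.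
From mathcomp Require Import all_field.
From mathcomp Require Import ring zify.
Set Implicit Arguments. Unset Strict Implicit. Unset Printing Implicit Defensive.
Import GRing.Theory Num.Theory.
Local Open Scope ring_scope.

Notation R := algC.
Implicit Types (P Q A B : {poly R}).

Definition Hs (n : nat) (P A B : {poly R}) : {poly R} :=
  \sum_(i < n.+1) P`_i *: (A ^+ (n - i) * B ^+ i).

Lemma Sub_sum (I : Type) (r : seq I) (Pr : pred I) (F : I -> {poly R}) n A B :
  Hs n (\sum_(x <- r | Pr x) F x) A B = \sum_(x <- r | Pr x) Hs n (F x) A B.
Proof.
rewrite /Hs; under eq_bigr do rewrite coef_sum scaler_suml.
exact: exchange_big.
Qed.

Lemma Sub_sumO k (F : 'I_k -> {poly R}) n A B :
  Hs n (\sum_(i < k) F i) A B = \sum_(i < k) Hs n (F i) A B.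
Proof. exact: Sub_sum. Qed.

Lemma SubD n P Q A B : Hs n (P + Q) A B = Hs n P A B + Hs n Q A B.
Proof. by rewrite /Hs -big_split /=; apply: eq_bigr => i _; rewrite coefD scalerDl. Qed.

Lemma SubZ n c P A B : Hs n (c *: P) A B = c *: Hs n P A B.
Proof. by rewrite /Hs scaler_sumr; apply: eq_bigr => i _; rewrite coefZ scalerA. Qed.

Lemma SubN n P A B : Hs n (- P) A B = - Hs n P A B.
Proof. by rewrite -scaleN1r SubZ scaleN1r. Qed.

Lemma SubB n P Q A B : Hs n (P - Q) A B = Hs n P A B - Hs n Q A B.
Proof. by rewrite SubD SubN. Qed.

Lemma Sub0 n A B : Hs n 0 A B = 0.
Proof. by rewrite /Hs big1 // => i _; rewrite coef0 scale0r. Qed.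

Lemma Sub_Xn n w A B : (w <= n)%N -> Hs n 'X^w A B = A ^+ (n - w) * B ^+ w.
Proof.
move=> hw; have hw' : (w < n.+1)%N by [].
rewrite /Hs (bigD1 (Ordinal hw')) //= coefXn eqxx scale1r big1 ?addr0 //.
move=> i /eqP hi; rewrite coefXn; case: eqP => [e|]; last by rewrite scale0r.
by exfalso; apply: hi; apply: val_inj.
Qed.

Lemma widen_coef P n (F : nat -> {poly R}) : (size P <= n)%N ->
  \sum_(i < size P) P`_i *: F i = \sum_(i < n) P`_i *: F i.
Proof.
move=> le; rewrite (big_ord_widen n (fun i => P`_i *: F i)) // big_mkcond.
by apply: eq_bigr => i _; case: ltnP => // h; rewrite nth_default ?scale0r.
Qed.

Lemma poly_expand P n : (size P <= n.+1)%N -> P = \sum_(i < n.+1) P`_i *: 'X^i.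
Proof. by move=> h; rewrite -widen_coef // -poly_def coefK. Qed.

Lemma Sub_mul a b P Q A B : (size P <= a.+1)%N -> (size Q <= b.+1)%N ->
  Hs (a + b) (P * Q) A B = Hs a P A B * Hs b Q A B.
Proof.
move=> hP hQ; rewrite {1}(poly_expand hP) {1}(poly_expand hQ).
rewrite mulr_suml Sub_sumO [Hs a P A B]/Hs mulr_suml; apply: eq_bigr => i _.
rewrite mulr_sumr Sub_sumO [Hs b Q A B]/Hs mulr_sumr; apply: eq_bigr => j _.
rewrite -scalerAl -scalerAr scalerA -exprD SubZ Sub_Xn; last first.
  by have := ltn_ord i; have := ltn_ord j; lia.
rewrite -scalerAl -scalerAr scalerA; congr (_ *: _).
have -> : (a + b - (i + j) = (a - i) + (b - j))%N.
  by have := ltn_ord i; have := ltn_ord j; lia.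
rewrite !exprD; ring.
Qed.

Lemma Sub1E P A B : Hs 1 P A B = P`_0 *: A + P`_1 *: B.
Proof. by rewrite /Hs big_ord_recr big_ord1 /= subn0 subnn !expr0 expr1 mulr1 mul1r. Qed.

Lemma Sub_pow k P A B : (size P <= 2)%N -> Hs k (P ^+ k) A B = (Hs 1 P A B) ^+ k.
Proof.
move=> hP; elim: k => [|k IH].
  by rewrite !expr0 -(expr0 'X) Sub_Xn // subnn !expr0 mulr1.
rewrite exprS -[k.+1]/(1 + k)%N Sub_mul // ?IH ?exprS //.
apply: (leq_trans (size_poly_exp_leq _ _)); have : ((size P).-1 <= 1)%N by lia.
move=> h; rewrite ltnS; apply: (leq_trans (leq_mul h (leqnn k))); lia.
Qed.


Lemma Sub_comp n P A B A' B' : (size A <= 2)%N -> (size B <= 2)%N ->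
  Hs n (Hs n P A B) A' B' = Hs n P (Hs 1 A A' B') (Hs 1 B A' B').
Proof.
move=> hA hB; rewrite [Hs n P A B]/Hs Sub_sumO [Hs n P _ _]/Hs; apply: eq_bigr => i _.
rewrite SubZ; congr (_ *: _).
have e : n = ((n - i) + i)%N by have := ltn_ord i; lia.
rewrite {1}e Sub_mul; first by rewrite (Sub_pow (n - i)) // (Sub_pow i).
- apply: (leq_trans (size_poly_exp_leq _ _)); have : ((size A).-1 <= 1)%N by lia.
  move=> h; rewrite ltnS; apply: (leq_trans (leq_mul h (leqnn _))); lia.
- apply: (leq_trans (size_poly_exp_leq _ _)); have : ((size B).-1 <= 1)%N by lia.
  move=> h; rewrite ltnS; apply: (leq_trans (leq_mul h (leqnn _))); lia.
Qed.

Lemma Sub_id n P : (size P <= n.+1)%N -> Hs n P 1 'X = P.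
Proof.
move=> h; rewrite {2}(poly_expand h) /Hs; apply: eq_bigr => i _.
by rewrite expr1n mul1r.
Qed.

Lemma size_Sub n P A B : (size A <= 2)%N -> (size B <= 2)%N ->
  (size (Hs n P A B) <= n.+1)%N.
Proof.
move=> hA hB; rewrite /Hs; apply: (leq_trans (size_sum _ _ _)).
apply/bigmax_leqP => i _; apply: (leq_trans (size_scale_leq _ _)).
apply: (leq_trans (size_mul_leq _ _)).
have h1 := size_poly_exp_leq A (n - i); have h2 := size_poly_exp_leq B i.
have : ((size A).-1 <= 1)%N by lia.
have : ((size B).-1 <= 1)%N by lia.
move=> hb ha.
have h1' : (size (A ^+ (n - i)) <= (n - i).+1)%N.
  apply: (leq_trans h1); rewrite ltnS; apply: (leq_trans (leq_mul ha (leqnn _))); lia.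
have h2' : (size (B ^+ i) <= i.+1)%N.
  apply: (leq_trans h2); rewrite ltnS; apply: (leq_trans (leq_mul hb (leqnn _))); lia.
have := ltn_ord i; lia.
Qed.

Lemma horner_Sub n P A B x : (size P <= n.+1)%N -> A.[x] = 1 ->
  (Hs n P A B).[x] = P.[B.[x]].
Proof.
move=> h hA; rewrite /Hs horner_sum (horner_coef_wide _ h); apply: eq_bigr => i _.
by rewrite hornerZ hornerM !horner_exp hA expr1n mul1r.
Qed.

Lemma Sub_neg n P : (size P <= n.+1)%N -> Hs n P 1 (- 'X) = P \Po (- 'X).
Proof.
move=> h; rewrite comp_polyE (widen_coef (fun i => (- 'X) ^+ i) h) /Hs.
by apply: eq_bigr => i _; rewrite expr1n mul1r.
Qed.

Lemma coef_Sub_rev n P j : (j <= n)%N -> (Hs n P 'X 1)`_j = P`_(n - j).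
Proof.
move=> hj; rewrite /Hs coef_sum.
have hj' : (n - j < n.+1)%N by lia.
rewrite (bigD1 (Ordinal hj')) //= big1 ?addr0.
  by rewrite expr1n mulr1 coefZ coefXn subKn // eqxx mulr1.
move=> i /eqP hi; rewrite expr1n mulr1 coefZ coefXn.
case: eqP => [e|]; last by rewrite mulr0.
exfalso; apply: hi; apply: val_inj => /=; have := ltn_ord i; lia.
Qed.


Lemma size1pX : (size (1 + 'X : {poly R})%R <= 2)%N.
Proof. by rewrite addrC size_XaddC. Qed.
Lemma size1mX : (size (1 - 'X : {poly R})%R <= 2)%N.
Proof. by rewrite -opprB size_opp size_XsubC. Qed.
Lemma sizeiB : (size ('i *: (1 - 'X) : {poly R})%R <= 2)%N.
Proof. by apply: leq_trans (size_scale_leq _ _) size1mX. Qed.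
Lemma sizeX : (size ('X : {poly R})%R <= 2)%N.
Proof. by rewrite size_polyX. Qed.
Lemma size1 : (size (1 : {poly R})%R <= 2)%N.
Proof. by rewrite size_poly1. Qed.

Lemma coefs1pX : (1 + 'X : {poly R})`_0 = 1 /\ (1 + 'X : {poly R})`_1 = 1.
Proof. by rewrite !coefD !coef1 !coefX /= add0r addr0. Qed.
Lemma coefs1mX : (1 - 'X : {poly R})`_0 = 1 /\ (1 - 'X : {poly R})`_1 = -1.
Proof. by rewrite !coefB !coef1 !coefX /= sub0r subr0. Qed.

Lemma even_pow (a : {poly R}) k : (- a) ^+ (2 * k) = a ^+ (2 * k).
Proof. by rewrite !exprM sqrrN. Qed.

Lemma inj_T n P : (size P <= n.+1)%N ->
  Hs n (Hs n P (1 + 'X) (1 - 'X)) (2^-1 *: (1 + 'X)) (2^-1 *: (1 - 'X)) = P.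
Proof.
move=> h; rewrite Sub_comp ?size1pX ?size1mX // !Sub1E.
have [a0 a1] := coefs1pX; have [b0 b1] := coefs1mX.
rewrite a0 a1 b0 b1 !scale1r scaleN1r -scalerDr -scalerBr.
have -> : (1 + 'X + (1 - 'X) : {poly R}) = 2%:R *: 1.
  by rewrite scaler_nat; ring.
have -> : (1 + 'X - (1 - 'X) : {poly R}) = 2%:R *: 'X.
  by rewrite scaler_nat; ring.
by rewrite !scalerA mulVf ?pnatr_eq0 // !scale1r Sub_id.
Qed.

Lemma inj_U n P : (size P <= n.+1)%N ->
  Hs n (Hs n P (1 + 'X) ('i *: (1 - 'X))) (2^-1 *: (1 + 'i^-1 *: 'X)) (2^-1 *: (1 - 'i^-1 *: 'X)) = P.
Proof.
move=> h; rewrite Sub_comp ?size1pX ?sizeiB // !Sub1E.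
rewrite -[RHS](Sub_id h); congr Hs; apply/polyP => j;
  rewrite !(coefD, coefZ, coefB, coef1, coefX, coefN) /=; 
  have hc0 : ('i : R) != 0 := @neq0Ci R; move: hc0; move: ('i : R) => c hc; field; exact: hc.
Qed.

Ltac coefsimp := apply/polyP => j; rewrite !(coefD, coefZ, coefB, coef1, coefX, coefN) /=.

Lemma sym_of_T n P lam : lam != 0 -> (size P <= n.+1)%N -> P \Po (- 'X) = P ->
  Hs n P (1 + 'X) (1 - 'X) = lam *: P -> Hs n P 'X 1 = P.
Proof.
move=> hl hs hE hT.
have e1 : Hs n (Hs n P 'X 1) (1 + 'X) (1 - 'X) = Hs n P (1 - 'X) (1 + 'X).
  by rewrite Sub_comp ?sizeX ?size1 // !Sub1E; congr Hs; coefsimp; ring.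
have e2 : Hs n (Hs n P (1 + 'X) (1 - 'X)) 1 (- 'X) = Hs n P (1 - 'X) (1 + 'X).
  by rewrite Sub_comp ?size1pX ?size1mX // !Sub1E; congr Hs; coefsimp; ring.
rewrite -[LHS](inj_T (size_Sub _ _ sizeX size1)) e1 -e2 hT SubZ Sub_neg // hE.
by rewrite -hT inj_T.
Qed.

Lemma coefM_low (f h : {poly R}) K : h`_0 != 0 ->
  (forall j, (j < K)%N -> (f * h)`_j = 0) -> forall j, (j < K)%N -> f`_j = 0.
Proof.
move=> h0 hfh; elim/ltn_ind => j IH hj.
have := hfh j hj; rewrite coefM big_ord_recr /= subnn big1 ?add0r.
  by move/eqP; rewrite mulf_eq0 (negbTE h0) orbF => /eqP.
move=> i _; rewrite IH ?mul0r //; have := ltn_ord i; lia.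
Qed.

Lemma i_neq (c : R) : c * c = 1 -> 'i - c != 0.
Proof.
move=> hc; apply/eqP => e; have ei : ('i : R) = c by apply/eqP; rewrite -subr_eq0 e.
have := @mulCii R; rewrite ei hc => /eqP; rewrite -subr_eq0 opprK.
by rewrite (_ : (1 + 1 : R) = 2%:R) // pnatr_eq0.
Qed.

Lemma final_alg m P lam : lam != 0 -> (size P <= (24 * m + 4).+1)%N ->
  P \Po (- 'X) = P ->
  Hs (24 * m + 4) P (1 + 'X) (1 - 'X) = lam *: P ->
  (forall j, (j < 4 * m + 2)%N -> P`_j = 0) ->
  (forall j, (j < 4 * m)%N -> (Hs (24 * m + 4) P (1 + 'X) ('i *: (1 - 'X)))`_j = 0) ->
  P = 0.
Proof.
move=> hl hs hE hT hlow hsh.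
set n := (24 * m + 4)%N in hs hT hsh.
set r2 := (4 * m + 2)%N in hlow.
have ek : r2 = (2 * (2 * m + 1))%N by rewrite /r2; lia.
have hrev := sym_of_T hl hs hE hT.
have hhigh : forall j, (n - r2 < j)%N -> P`_j = 0.
  move=> j hj; case: (leqP j n) => hjn.
    by rewrite -hrev coef_Sub_rev // hlow //; rewrite /r2 /n in hj *; lia.
  by rewrite nth_default //; apply: leq_trans hs _.
have hsz : (size P <= n - r2 + 1)%N.
  by apply/leq_sizeP => j hj; apply: hhigh; lia.
set R0 := drop_poly r2 P.
have hPR : P = R0 * 'X^r2.
  rewrite -{1}(poly_take_drop r2 P).
  have -> : take_poly r2 P = 0.
    apply/polyP => j; rewrite coef_take_poly coef0; case: ifP => // hj.
    by apply: hlow.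
  by rewrite add0r.
have hR0 : (size R0 <= (n - r2).+1)%N by rewrite size_drop_poly; lia.
have e1X : (1 - 'X : {poly R}) = - ('X - 1%:P) by rewrite opprB.
have d1 : ('X - 1%:P) ^+ r2 %| P.
  have e : Hs n P (1 + 'X) (1 - 'X) = ('X - 1%:P) ^+ r2 * Hs (n - r2) R0 (1 + 'X) (1 - 'X).
    have en : n = (r2 + (n - r2))%N by rewrite /n /r2; lia.
    rewrite {1}hPR (mulrC R0) {1}en Sub_mul ?size_polyXn // Sub_Xn // subnn expr0 mul1r.
    by rewrite e1X ek even_pow.
  by rewrite -(dvdpZr _ _ hl) -hT e dvdp_mulIl.
have d2 : ('X - (-1)%:P) ^+ r2 %| P.
  case/dvdpP: d1 => S hS.
  rewrite -hE {1}hS rmorphM rmorphXn /= comp_polyB comp_polyX comp_polyC.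
  have -> : (- 'X - 1%:P : {poly R}) = - ('X - (-1)%:P) by rewrite polyCN opprK opprD.
  by rewrite ek even_pow -ek dvdp_mulIr.
have d3 : 'X^r2 %| P by rewrite hPR dvdp_mulIr.
have c1 : coprimep ('X^r2 : {poly R}) (('X - 1%:P) ^+ r2).
  rewrite coprimep_pexpr; last by rewrite /r2; lia.
  by rewrite coprimep_XsubC rootE hornerXn expr1n oner_eq0.
have m2 : (-1 - 1 : R) != 0.
  by rewrite -opprD oppr_eq0 (_ : (1 + 1 : R) = 2%:R) // pnatr_eq0.
have c2 : coprimep (('X^r2 : {poly R}) * ('X - 1%:P) ^+ r2) (('X - (-1)%:P) ^+ r2).
  rewrite coprimep_pexpr; last by rewrite /r2; lia.
  rewrite coprimep_XsubC rootE hornerM hornerXn horner_exp hornerXsubC.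
  by rewrite mulf_neq0 // expf_neq0 // oppr_eq0 oner_eq0.
set g := ('X^r2 : {poly R}) * ('X - 1%:P) ^+ r2 * ('X - (-1)%:P) ^+ r2.
have dg : g %| P by rewrite /g (Gauss_dvdp _ c2) (Gauss_dvdp _ c1) d1 d2 d3.
case/dvdpP: dg => Q hQ.
have nz1 : ('X^r2 : {poly R}) != 0 by rewrite -size_poly_eq0 size_polyXn.
have nz2 : forall c : R, ('X - c%:P) ^+ r2 != 0 by move=> c; rewrite -size_poly_eq0 size_exp_XsubC.
have gnz : g != 0 by rewrite /g !mulf_neq0.
have szg : size g = (3 * r2).+1.
  by rewrite /g !size_mul ?mulf_neq0 // size_polyXn !size_exp_XsubC /=; lia.
case: (eqVneq Q 0) => [Q0|Qnz]; first by rewrite hQ Q0 mul0r.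
have hszQ : (size Q + 3 * r2 <= n - r2 + 1)%N.
  by move: hsz; rewrite hQ size_mul // szg addnS /=.
set N := (8 * m - 4)%N.
have m1 : (0 < m)%N.
  by move: hszQ; rewrite /n /r2; have := size_poly_gt0 Q; rewrite Qnz; lia.
have hsQ : (size Q <= N.+1)%N by move: hszQ; rewrite /n /r2 /N; lia.
have hgE : g \Po (- 'X) = g.
  rewrite /g !rmorphM !rmorphXn /= !comp_polyB !comp_polyX !comp_polyC.
  have -> : (- 'X - 1%:P : {poly R}) = - ('X - (-1)%:P) by rewrite polyCN opprK opprD.
  have -> : (- 'X - (-1)%:P : {poly R}) = - ('X - 1%:P) by rewrite polyCN !opprK opprB addrC.
  rewrite ek !even_pow -ek; ring.
have hQE : Q \Po (- 'X) = Q.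
  apply: (mulIf gnz); rewrite -{1}hgE -rmorphM /= -hQ; exact: hE.
set phi := Hs N Q (1 + 'X) ('i *: (1 - 'X)).
have hszg : (size g <= (4 * r2).+1)%N by rewrite szg; lia.
have hUP : Hs n P (1 + 'X) ('i *: (1 - 'X)) = phi * Hs (4 * r2) g (1 + 'X) ('i *: (1 - 'X)).
  have en : n = (N + 4 * r2)%N by rewrite /n /N /r2; lia.
  by rewrite hQ {1}en Sub_mul.
have h0 : (Hs (4 * r2) g (1 + 'X) ('i *: (1 - 'X)))`_0 != 0.
  rewrite -horner_coef0 horner_Sub //; last by rewrite !hornerE ?addr0.
  rewrite !hornerE ?subr0 ?mulr1.
  have hi0 : ('i : R) != 0 := @neq0Ci R.
  have hi1 : ('i : R) - 1 != 0 by apply: i_neq; rewrite mulr1.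
  have hi2 : ('i : R) - -1 != 0 by apply: i_neq; rewrite mulrNN mulr1.
  by rewrite !mulf_neq0 // expf_neq0.
have hphilow : forall j, (j < 4 * m)%N -> phi`_j = 0.
  by apply: (coefM_low h0) => j hj; rewrite -hUP; apply: hsh.
have hphisym : Hs N phi 'X 1 = phi.
  rewrite /phi Sub_comp ?size1pX ?sizeiB // !Sub1E.
  rewrite -{2}hQE -(Sub_neg hsQ) Sub_comp ?size1 //; last by rewrite size_opp sizeX.
  by rewrite !Sub1E; congr Hs; coefsimp; ring.
have phi0 : phi = 0.
  apply/polyP => j; rewrite coef0.
  case: (ltnP j (4 * m)) => hj; first exact: hphilow.
  case: (leqP j N) => hjN.
    by rewrite -hphisym coef_Sub_rev //; apply: hphilow; rewrite /N in hjN *; lia.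
  rewrite nth_default //; apply: leq_trans (size_Sub _ _ size1pX sizeiB) _; exact: hjN.
have : Q = 0 by rewrite -(inj_U hsQ) -/phi phi0 Sub0.
by move/eqP; rewrite (negbTE Qnz).
Qed.

Lemma F2_cases (x : 'F_2) : x = 0 \/ x = 1.
Proof.
case: x => [[|[|k]] Hk]; [left|right|by []]; by apply: val_inj.
Qed.

Lemma F2_11 : (1 + 1 : 'F_2) = 0.
Proof. by apply: val_inj. Qed.

Lemma F2_xx (x : 'F_2) : x + x = 0.
Proof. by case: (F2_cases x) => ->; rewrite ?addr0 ?F2_11. Qed.

Lemma F2_10 : (1 : 'F_2) != 0.
Proof. by rewrite oner_eq0. Qed.

Definition sgn (b : 'F_2) : R := if b == 0 then 1 else -1.

Lemma sgnD a b : sgn (a + b) = sgn a * sgn b.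
Proof.
rewrite /sgn; case: (F2_cases a) => ->; case: (F2_cases b) => ->;
  rewrite ?addr0 ?add0r ?F2_11 ?eqxx ?(negbTE F2_10) ?mulr1 ?mul1r ?mulrNN //. all: rewrite ?mulr1 ?mul1r ?mulrNN //; ring.
Qed.

Lemma sgn0 : sgn 0 = 1. Proof. by rewrite /sgn eqxx. Qed.

Lemma sgn_eq1 b : (sgn b == 1) = (b == 0).
Proof.
rewrite /sgn; case: (F2_cases b) => ->; rewrite ?eqxx // (negbTE F2_10).
by apply/negbTE; rewrite -subr_eq0 -opprD oppr_eq0 (_ : (1 + 1 : R) = 2%:R) // pnatr_eq0.
Qed.

Lemma sgn_neq0 b : sgn b != 0.
Proof. by rewrite /sgn; case: ifP; rewrite ?oppr_eq0 oner_eq0. Qed.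

Section Vec.
Variable n : nat.
Notation vec := 'rV['F_2]_n.

Lemma vec_xx (v : vec) : v + v = 0.
Proof. by apply/rowP => i; rewrite !mxE F2_xx. Qed.

Lemma dotDl (x y z : vec) : dot (x + y) z = dot x z + dot y z.
Proof. by rewrite /dot -big_split; apply: eq_bigr => i _; rewrite mxE mulrDl. Qed.

Lemma dotC (x y : vec) : dot x y = dot y x.
Proof. by rewrite /dot; apply: eq_bigr => i _; rewrite mulrC. Qed.

Lemma dotDr (x y z : vec) : dot z (x + y) = dot z x + dot z y.
Proof. by rewrite dotC dotDl !(dotC z). Qed.

Lemma wt_le (x : vec) : (wt x <= n)%N.
Proof. by rewrite /wt; apply: leq_trans (max_card _) _; rewrite card_ord. Qed.

Lemma wt0 : wt (0 : vec) = 0%N.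
Proof. by rewrite /wt; apply/eqP; rewrite cards_eq0; apply/eqP/setP => i; rewrite !inE mxE eqxx. Qed.

Lemma wt_eq0 (x : vec) : (wt x == 0%N) = (x == 0).
Proof.
apply/idP/idP => [|/eqP->]; last by rewrite wt0.
rewrite /wt cards_eq0 => /eqP hs; apply/eqP/rowP => i; rewrite mxE.
apply/eqP; apply: negbNE; apply/negP => hi.
have : i \in [set i | x 0 i != 0] by rewrite inE.
by rewrite hs inE.
Qed.

Lemma F2_prod (a b : 'F_2) : a * b = ((a != 0) && (b != 0))%:R.
Proof.
by case: (F2_cases a) => ->; case: (F2_cases b) => ->;
  rewrite ?mul0r ?mulr0 ?mulr1 ?eqxx ?F2_10.
Qed.

Definition cap (x y : vec) := #|[set i | (x 0 i != 0) && (y 0 i != 0)]|.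

Lemma dot_card (x y : vec) : dot x y = (cap x y)%:R.
Proof.
rewrite /dot (eq_bigr (fun i => if (x 0 i != 0) && (y 0 i != 0) then 1 else 0)); last first.
  by move=> i _; rewrite F2_prod; case: (_ && _).
rewrite -big_mkcond /= sumr_const /cap; congr (_ *+ _); apply: eq_card => i; rewrite inE //.
Qed.

Lemma wtD (x y : vec) : (wt (x + y) + 2 * cap x y = wt x + wt y)%N.
Proof.
rewrite /wt /cap.
set A := [set i | x 0 i != 0]; set B := [set i | y 0 i != 0].
have -> : [set i | (x 0 i != 0) && (y 0 i != 0)] = A :&: B by apply/setP => i; rewrite !inE.
have -> : [set i | (x + y) 0 i != 0] = (A :|: B) :\: (A :&: B).
  apply/setP => i; rewrite !inE mxE.
  by case: (F2_cases (x 0 i)) => ->; case: (F2_cases (y 0 i)) => ->;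
     rewrite ?addr0 ?add0r ?F2_11 ?eqxx ?F2_10.
rewrite cardsD (setIidPr _); last by apply/subsetP => i; rewrite !inE => /andP[->].
have := cardsUI A B; have : (#|A :&: B| <= #|A :|: B|)%N.
  by apply: subset_leq_card; apply/subsetP => i; rewrite !inE => /andP[->].
lia.
Qed.

Lemma wt_tri (x y : vec) : (wt (x + y) <= wt x + wt y)%N.
Proof. by rewrite -wtD leq_addr. Qed.

End Vec.

Section SD.
Variable n : nat.
Notation vec := 'rV['F_2]_n.
Variable C : {vspace vec}.
Hypothesis sdC : self_dual C.

Lemma sd_dot x y : x \in C -> y \in C -> dot x y = 0.
Proof.
move=> hx hy; move: hx; rewrite sdC /in_dual => /forallP /(_ y).
by rewrite hy /= => /eqP.
Qed.

Lemma F2_nat_eq0 k : ((k%:R : 'F_2) == 0) = ~~ odd k.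
Proof.
apply/eqP/idP => [h|h].
  have := @val_Fp_nat 2 isT k; rewrite h /= => e.
  by move: e; rewrite modn2; case: (odd k).
by apply/val_inj; rewrite /= (@val_Fp_nat 2 isT k) modn2; move: h; case: (odd k).
Qed.

Lemma cap_even x y : x \in C -> y \in C -> ~~ odd (cap x y).
Proof. by move=> hx hy; rewrite -F2_nat_eq0 -dot_card sd_dot. Qed.

Lemma cap_self (x : vec) : cap x x = wt x.
Proof. by rewrite /cap /wt; apply: eq_card => i; rewrite !inE andbb. Qed.

Lemma wt_even x : x \in C -> ~~ odd (wt x).
Proof. by move=> hx; rewrite -cap_self cap_even. Qed.

Lemma wt_add4 x y : x \in C -> y \in C ->
  exists k, (wt (x + y) + 4 * k = wt x + wt y)%N.
Proof.
move=> hx hy; have := wtD x y; have ho := cap_even hx hy.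
have hc := odd_double_half (cap x y); rewrite (negbTE ho) add0n -mul2n in hc.
by exists (cap x y)./2; rewrite -H -{2}hc mulnA.
Qed.

Lemma char_sum (chi : vec -> R) :
  (forall x y, x \in C -> y \in C -> chi (x + y) = chi x * chi y) ->
  \sum_(u | u \in C) chi u =
    if [forall u, (u \in C) ==> (chi u == 1)] then #|[set u | u \in C]|%:R else 0.
Proof.
move=> hM; case: ifP => [/forallP h|hF].
  rewrite (eq_bigr (fun _ => 1)); last by move=> u hu; apply/eqP; have := h u; rewrite hu.
  by rewrite sumr_const; congr (_ *+ _); apply: eq_card => u; rewrite inE.
move/negbT: hF => /forallPn [w]; rewrite negb_imply => /andP[hw hcw].
set S := \sum_(u | u \in C) chi u.
have e : S = chi w * S.
  rewrite {1}/S (reindex_inj (addrI w)) /=.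
  rewrite (eq_bigl (fun u => u \in C)); last first.
    move=> u; apply/idP/idP => hu; last exact: memvD.
    have -> : u = w + (w + u) by rewrite addrA vec_xx add0r.
    exact: memvD.
  by rewrite /S mulr_sumr; apply: eq_bigr => u hu; rewrite hM.
have : (1 - chi w) * S = 0 by rewrite mulrBl mul1r {1}e subrr.
by move/eqP; rewrite mulf_eq0 subr_eq0 eq_sym (negbTE hcw) /= => /eqP.
Qed.

End SD.

Section Ker.
Variable n : nat.
Notation vec := 'rV['F_2]_n.

Lemma prod_count (P : pred 'I_n) (c : {poly R}) :
  \prod_(i | P i) c = c ^+ #|[set i | P i]|.
Proof.
rewrite (eq_bigl (fun i => i \in [set i | P i])) ?prodr_const // => i; by rewrite inE.
Qed.

Lemma kernel_sum (u : vec) :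
  \sum_(v : vec) sgn (dot u v) *: ('X^(wt v) : {poly R}) =
  (1 + 'X) ^+ (n - wt u) * (1 - 'X) ^+ (wt u).
Proof.
pose F := fun (i : 'I_n) (b : 'F_2) =>
  (sgn (u 0 i * b))%:P * (if b == 0 then 1 else 'X : {poly R}).
have step1 : forall v : vec, sgn (dot u v) *: ('X^(wt v) : {poly R}) = \prod_i F i (v 0 i).
  move=> v; rewrite /F big_split /= -mul_polyC; congr (_ * _).
    by rewrite -rmorph_prod /dot (big_morph sgn sgnD sgn0).
  rewrite (eq_bigr (fun i => if v 0 i != 0 then 'X else 1)); last by move=> i _; case: eqP.
  rewrite -big_mkcond /= prod_count /wt; congr (_ ^+ _).
have step2 : \sum_(v : vec) \prod_i F i (v 0 i) = \prod_i \sum_(b : 'F_2) F i b.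
  rewrite bigA_distr_bigA.
  have hb : bijective (fun f : {ffun 'I_n -> 'F_2} => (\row_i f i : vec)).
    exists (fun v : vec => [ffun i => v 0 i]).
      by move=> f; apply/ffunP => i; rewrite ffunE mxE.
    by move=> v; apply/rowP => i; rewrite mxE ffunE.
  rewrite (reindex _ (onW_bij _ hb)) /=.
  by apply: eq_bigr => f _; apply: eq_bigr => i _; rewrite mxE.
have step3 : forall i, \sum_(b : 'F_2) F i b = 1 + (sgn (u 0 i))%:P * 'X.
  move=> i; rewrite (bigD1 0) //= (big_pred1 1); last first.
    by move=> b /=; case: (F2_cases b) => ->; rewrite ?eqxx ?F2_10.
  by rewrite /F mulr0 sgn0 ?eqxx !mulr1 (negbTE F2_10) ?polyC1.
under eq_bigr => v _ do rewrite step1.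
rewrite step2.
under eq_bigr do rewrite step3.
rewrite (bigID (fun i => u 0 i == 0)) /=.
rewrite (eq_bigr (fun _ => 1 + 'X)); last by move=> i /eqP ->; rewrite sgn0 mul1r.
rewrite [X in _ * X](eq_bigr (fun _ => 1 - 'X)); last first.
  by move=> i hi; rewrite /sgn (negbTE hi) polyCN mulNr mul1r.
rewrite !prod_count /wt; congr (_ ^+ _ * _ ^+ _).
have hc := cardsC [set i : 'I_n | u 0 i != 0]; rewrite card_ord in hc.
have e : #|[set i | u 0 i == 0]| = #|~: [set i | u 0 i != 0]| by apply: eq_card => i; rewrite !inE negbK.
by rewrite e cardsCs setCK card_ord.
Qed.

End Ker.

Lemma ipow_even w : ~~ odd w -> ('i : R) ^+ w = if (w %% 4 == 0)%N then 1 else -1.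
Proof.
move=> hw; have hc := odd_double_half w; rewrite (negbTE hw) add0n -mul2n in hc.
rewrite -hc exprM sqrCi -signr_odd.
have -> : ((2 * w./2) %% 4 == 0)%N = ~~ odd w./2.
  by rewrite (_ : 4 = 2 * 2)%N // -muln_modr modn2; case: (odd _).
by case: (odd _); rewrite ?expr1 ?expr0.
Qed.

Lemma F2_neq0 (b : 'F_2) : b != 0 -> b = 1.
Proof. by case: (F2_cases b) => ->; rewrite ?eqxx. Qed.

Lemma sgn_inj : injective sgn.
Proof.
move=> a b; case: (F2_cases a) => ->; case: (F2_cases b) => -> //;
  rewrite /sgn eqxx (negbTE F2_10) => /eqP;
  rewrite ?(eq_sym (-1)) -subr_eq0 ?opprK -?opprD ?oppr_eq0 (_ : (1 + 1 : R) = 2%:R) // pnatr_eq0. all: by [].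
Qed.

Lemma even_mod4 w : ~~ odd w -> ~~ (w %% 4 == 0)%N -> (w %% 4 = 2)%N.
Proof.
move=> hw; have hc := odd_double_half w; rewrite (negbTE hw) add0n -mul2n in hc.
rewrite -hc (_ : 4 = 2 * 2)%N // -muln_modr modn2; by case: (odd _).
Qed.

Section SD2.
Variable n : nat.
Notation vec := 'rV['F_2]_n.
Variable C : {vspace vec}.
Hypothesis sdC : self_dual C.
Hypothesis seC : singly_even C.

Lemma shadow_char v :
  [forall u, (u \in C) ==> ('i ^+ wt u * sgn (dot u v) == 1)] = in_shadow C v.
Proof.
apply/idP/idP => [/forallP H | /andP [/forallP H0 hvC]].
  apply/andP; split.
    apply/forallP => y; apply/implyP => /andP [hy hy4].
    have := H y; rewrite hy /= (ipow_even (wt_even sdC hy)) hy4 mul1r sgn_eq1 dotC //.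
  case: seC => x hx hx4; apply/negP => hv.
  have := H x; rewrite hx /= (ipow_even (wt_even sdC hx)) hx4 /= (sd_dot sdC hx hv) sgn0 mulr1.
  by rewrite -subr_eq0 -opprD oppr_eq0 (_ : (1 + 1 : R) = 2%:R) // pnatr_eq0.
have [y hyC hvy] : exists2 y, y \in C & dot v y != 0.
  move: hvC; rewrite sdC /in_dual => /forallPn [y]; rewrite negb_imply => /andP[hy hvy].
  by exists y.
have hy4 : (wt y %% 4 = 2)%N.
  have := H0 y; rewrite /in_C0 hyC /= (negbTE hvy) implybF.
  exact: even_mod4 (wt_even sdC hyC).
apply/forallP => u; apply/implyP => hu.
rewrite (ipow_even (wt_even sdC hu)).
case: ifP => hu4.
  have := H0 u; rewrite /in_C0 hu hu4 /= => /eqP; rewrite dotC => ->.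
  by rewrite sgn0 mulr1.
have [k hk] := wt_add4 sdC hu hyC.
have huy : in_C0 C (u + y).
  rewrite /in_C0 memvD //=; have := even_mod4 (wt_even sdC hu); rewrite hu4 => /(_ isT) h2.
  apply/eqP; have e : ((wt u + wt y) %% 4 = 0)%N by rewrite -modnDm h2 hy4.
  by move: e; rewrite -hk addnC mulnC modnMDl.
have := H0 (u + y); rewrite huy /= dotDr => /eqP e.
have -> : dot u v = dot v y.
  apply/eqP; rewrite dotC -subr_eq0; apply/eqP.
  by rewrite -[X in _ - X](addKr (dot v u)) e addr0 opprK addrC F2_xx.
by rewrite (F2_neq0 hvy) /sgn (negbTE F2_10) mulrNN mulr1.
Qed.

End SD2.

Section MW.
Variable n : nat.
Notation vec := 'rV['F_2]_n.
Variable C : {vspace vec}.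
Hypothesis sdC : self_dual C.

Definition Wp : {poly R} := \sum_(x | x \in C) 'X^(wt x).
Definition Shp : {poly R} := \sum_(v | in_shadow C v) 'X^(wt v).
Definition cC := #|[set u | u \in C]|.

Lemma swap_sum (a : vec -> R) :
  \sum_(v : vec) (\sum_(u | u \in C) a u * sgn (dot u v)) *: ('X^(wt v) : {poly R}) =
  \sum_(u | u \in C) a u *: ((1 + 'X) ^+ (n - wt u) * (1 - 'X) ^+ (wt u)).
Proof.
under eq_bigr do rewrite scaler_suml.
rewrite exchange_big /=; apply: eq_bigr => u hu.
by rewrite -kernel_sum scaler_sumr; apply: eq_bigr => v _; rewrite scalerA.
Qed.

Lemma macW : cC%:R *: Wp = \sum_(u | u \in C) ((1 + 'X) ^+ (n - wt u) * (1 - 'X) ^+ (wt u)).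
Proof.
have e2 : \sum_(u | u \in C) ((1 + 'X) ^+ (n - wt u) * (1 - 'X) ^+ (wt u)) =
    \sum_(u | u \in C) (1 : R) *: ((1 + 'X) ^+ (n - wt u) * (1 - 'X) ^+ (wt u) : {poly R}).
  by apply: eq_bigr => u _; rewrite scale1r.
rewrite e2.
rewrite -(swap_sum (fun _ => 1)) /Wp scaler_sumr [LHS]big_mkcond /=; apply: eq_bigr => v _.
under eq_bigr do rewrite mul1r.
rewrite (char_sum (C := C) (chi := fun u => sgn (dot u v))); last first.
  by move=> x y _ _; rewrite dotDl sgnD.
have -> : [forall u, (u \in C) ==> (sgn (dot u v) == 1)] = (v \in C).
  rewrite sdC /in_dual; apply: eq_forallb => u; by rewrite sgn_eq1 dotC.
by case: (v \in C); rewrite ?scale0r.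
Qed.

Hypothesis seC : singly_even C.

Lemma ipow4 : ('i : R) ^+ 4 = 1.
Proof. by rewrite (_ : 4 = 2 * 2)%N // exprM sqrCi expr2 mulrNN mulr1. Qed.

Lemma shadowW : cC%:R *: Shp =
  \sum_(u | u \in C) 'i ^+ (wt u) *: ((1 + 'X) ^+ (n - wt u) * (1 - 'X) ^+ (wt u)).
Proof.
rewrite -swap_sum /Shp scaler_sumr [LHS]big_mkcond /=; apply: eq_bigr => v _.
rewrite (char_sum (C := C) (chi := fun u => 'i ^+ wt u * sgn (dot u v))); last first.
  move=> x y hx hy; have [k hk] := wt_add4 sdC hx hy.
  rewrite dotDl sgnD mulrACA -exprD -hk exprD exprM ipow4 expr1n mulr1 //.
rewrite (shadow_char sdC seC).
by case: (in_shadow C v); rewrite ?scale0r.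
Qed.

Lemma W_T : Hs n Wp (1 + 'X) (1 - 'X) = cC%:R *: Wp.
Proof.
rewrite macW /Wp Sub_sum; apply: eq_bigr => u _; by rewrite Sub_Xn // wt_le.
Qed.

Lemma W_U : Hs n Wp (1 + 'X) ('i *: (1 - 'X)) = cC%:R *: Shp.
Proof.
rewrite shadowW /Wp Sub_sum; apply: eq_bigr => u _.
by rewrite Sub_Xn ?wt_le // exprZn -scalerAr.
Qed.

Lemma cC_sq : (cC * cC = 2 ^ n)%N.
Proof.
have := congr1 (horner^~ 1) macW.
rewrite hornerZ /Wp !horner_sum.
under eq_bigr do rewrite hornerXn expr1n.
under [in RHS]eq_bigr do rewrite hornerM !horner_exp !hornerE subrr expr0n.
rewrite sumr_const (bigD1 0) ?mem0v //= wt0 big1 ?addr0; last first.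
  by move=> u /andP[_ hu]; rewrite -wt_eq0 in hu; rewrite (negbTE hu) mulr0.
rewrite subn0 mulr1 -mulr_natr (_ : #|[pred u | u \in C]| = cC); last first.
  by apply: eq_card => u; rewrite inE.
rewrite mul1r -natrM (_ : (1 + 1 : R) = 2%:R) // -natrX => /eqP; rewrite eqr_nat => /eqP //.
Qed.

End MW.

Section Coefs.
Variable n : nat.
Notation vec := 'rV['F_2]_n.
Variable C : {vspace vec}.
Hypothesis sdC : self_dual C.
Hypothesis seC : singly_even C.

Lemma shadow_sum v s : in_shadow C v -> in_shadow C s -> v + s \in C.
Proof.
rewrite -!(shadow_char sdC seC) => /forallP hv /forallP hs.
rewrite sdC /in_dual; apply/forallP => u; apply/implyP => hu.
have := hv u; have := hs u; rewrite hu /= => /eqP e1 /eqP e2.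
have : sgn (dot u v) = sgn (dot u s).
  apply: (mulfI (expf_neq0 (wt u) (@neq0Ci R))); by rewrite e1 e2.
move/sgn_inj => e; by rewrite dotDl !(dotC _ u) e F2_xx.
Qed.

Lemma Wp_low d : (forall x, x \in C -> x != 0 -> (d <= wt x)%N) ->
  forall j, (j < d)%N -> (Wp C)`_j = (j == 0%N)%:R.
Proof.
move=> hmin j hj; rewrite /Wp coef_sum.
under eq_bigr do rewrite coefXn.
rewrite (bigD1 0) ?mem0v //= wt0 big1 ?addr0 //.
move=> x /andP[hx hx0]; case: eqP => // e.
by have := hmin x hx hx0; rewrite -e; lia.
Qed.

Lemma Shp_low m s0 : (forall x, x \in C -> x != 0 -> (4 * m + 2 <= wt x)%N) ->
  in_shadow C s0 -> wt s0 = 2%N ->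
  forall j, (j < 4 * m)%N -> (Shp C)`_j = (j == 2%N)%:R.
Proof.
move=> hmin hs0 hw j hj; rewrite /Shp coef_sum.
under eq_bigr do rewrite coefXn.
rewrite (bigD1 s0) //= hw big1 ?addr0 //.
move=> v /andP[hv hne]; case: eqP => // e.
have hvs := shadow_sum hv hs0.
have hnz : v + s0 != 0.
  apply: contra hne => /eqP h; apply/eqP.
  by rewrite -[v]addr0 -(vec_xx s0) addrA h add0r.
have := hmin _ hvs hnz; have := wt_tri v s0; rewrite hw -e; lia.
Qed.

Lemma size_Wp : (size (Wp C) <= n.+1)%N.
Proof.
rewrite /Wp; apply: (leq_trans (size_sum _ _ _)); apply/bigmax_leqP => x _.
by rewrite size_polyXn ltnS wt_le.
Qed.

Lemma Wp_even : (Wp C) \Po (- 'X) = Wp C.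
Proof.
rewrite /Wp rmorph_sum; apply: eq_bigr => x hx /=.
rewrite rmorphXn /= comp_polyX.
have hc := odd_double_half (wt x); rewrite (negbTE (wt_even sdC hx)) add0n -mul2n in hc.
by rewrite -hc even_pow.
Qed.

Lemma cC_gt0 : (0 < cC C)%N.
Proof. by apply/card_gt0P; exists 0; rewrite inE mem0v. Qed.

End Coefs.

Unset Implicit Arguments.
Set Strict Implicit.

Theorem mainTheorem2 (m : nat) (C D : {vspace 'rV['F_2]_(24 * m + 4)}) :
  self_dual C -> singly_even C -> minimal_shadow C ->
  is_nkd_code C (12 * m + 2) (4 * m + 2) ->
  self_dual D -> singly_even D -> minimal_shadow D ->
  is_nkd_code D (12 * m + 2) (4 * m + 2) ->
  weight_enum C = weight_enum D.
Proof.
move=> sdC seC [[sC hsC hwC] _] [_ [_ minC]] sdD seD [[sD hsD hwD] _] [_ [_ minD]].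

have ecd : cC C = cC D.
  apply/eqP; rewrite -(eqn_sqr) !expnS !expn0 !muln1 (cC_sq sdC) (cC_sq sdD) //.
have hP : Wp C - Wp D = 0.
  apply: (final_alg (m := m) (lam := (cC C)%:R)).
  - by rewrite pnatr_eq0 -lt0n cC_gt0.
  - by apply: leq_trans (size_add _ _) _; rewrite size_opp geq_max !size_Wp.
  - by rewrite comp_polyB !Wp_even.
  - by rewrite SubB !W_T // ecd scalerBr.
  - move=> j hj; rewrite coefB (Wp_low minC) // (Wp_low minD) // subrr //.
  - move=> j hj; rewrite SubB !W_U // ecd -scalerBr coefZ coefB.
    by rewrite (Shp_low sdC seC minC hsC hwC) // (Shp_low sdD seD minD hsD hwD) // subrr mulr0.
have hW : Wp C = Wp D by apply/eqP; rewrite -subr_eq0 hP.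
have hm : forall E : {vspace 'rV['F_2]_(24 * m + 4)}, map_poly intr (weight_enum E) = Wp E.
  by move=> E; rewrite /weight_enum /Wp rmorph_sum; apply: eq_bigr => x _; rewrite rmorphXn /= map_polyX.
apply/polyP => j; apply: (@intr_inj R).
by rewrite -!coef_map hm hW -hm.
Qed.
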